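(* Let $k\ge1$ and let $\lambda_{opt}=\min_{C}\max_{1\le i\le n}\min_{c\in C}\mathsf{E}\mathrm{d}(c,P_i)$, the minimum taken over all sets $C$ of $k$ points of $T$. Then either $\lambda_{opt}=\mathsf{E}\mathrm{d}(p_i^*,P_i)$ for some $i$, or there exist indices $i,j$ and a point $c_{ij}$ on the path $\pi(p_i^*,p_j^* )$ with $\mathsf{E}\mathrm{d}(c_{ij},P_i)=\mathsf{E}\mathrm{d}(c_{ij},P_j)$ such that $\lambda_{opt}=\mathsf{E}\mathrm{d}(c_{ij},P_i)=\mathsf{E}\mathrm{d}(c_{ij},P_j)$.
   Context: $T$ is a tree with positive edge lengths, edges regarded as segments; $\pi(p,q)$ is the simple path between points $p,q$ and $d$ the path-length distance. Uncertain point $P_i$ ($1\le i\le n$) has weight $w_i\ge0$, locations $p_{ij}$ and probabilities $f_{ij}\ge0$ summing to $1$; $\mathsf{E}\mathrm{d}(x,P_i)=w_i\sum_j f_{ij}d(x,p_{ij})$. $p_i^*$ is a vertex of $T$ minimizing $\mathsf{E}\mathrm{d}(\cdot,P_i)$ over $T$ (the median of $P_i$). As $x$ moves along $\pi(p_i^*,p_j^* )$ from $p_i^*$ to $p_j^*$, $\mathsf{E}\mathrm{d}(x,P_i)$ is nondecreasing and $\mathsf{E}\mathrm{d}(x,P_j)$ is nonincreasing. *)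

(* Defs.v *)
From HB Require Import structures.
From mathcomp Require Import all_boot all_order all_algebra.
Set Implicit Arguments. Unset Strict Implicit. Unset Printing Implicit Defensive.
Import Order.TTheory GRing.Theory Num.Theory.
Local Open Scope ring_scope.

Section TreeDefs.
Variable R : realFieldType.
Variable V : finType.

Definition pathlen (len : V -> V -> R) (u : V) (p : seq V) : R :=
  \sum_(e <- pairmap len u p) e.

Definition simple_path (adj : rel V) (u v : V) (p : seq V) : bool :=
  [&& path adj u p, last u p == v & uniq (u :: p)].

Definition is_wtree (adj : rel V) (len : V -> V -> R) : Prop :=
  [/\ (forall u v, adj u v = adj v u),
      (forall u, ~~ adj u u),
      (forall u v, len u v = len v u),
      (forall u v, adj u v -> 0 < len u v)
    & (forall u v, exists p, simple_path adj u v p) /\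
      (forall u v p q, simple_path adj u v p -> simple_path adj u v q -> p = q)].

Definition is_vdist (adj : rel V) (len : V -> V -> R) (dV : V -> V -> R) : Prop :=
  forall u v p, simple_path adj u v p -> dV u v = pathlen len u p.

(* Pt a b s represents the point at distance s from a on the edge ab;
   Pt a a 0 represents the vertex a. *)
Record point := Pt { pa : V; pb : V; ps : R }.

Definition vpt (v : V) : point := Pt v v 0.

Definition elen (len : V -> V -> R) (a b : V) : R :=
  if a == b then 0 else len a b.

Definition valid_pt (adj : rel V) (len : V -> V -> R) (x : point) : Prop :=
  (adj (pa x) (pb x) /\ 0 <= ps x <= len (pa x) (pb x)) \/
  (pa x = pb x /\ ps x = 0).

Definition tdist (len : V -> V -> R) (dV : V -> V -> R) (x y : point) : R :=
  let: Pt a b s := x in let: Pt c e t := y in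
  let L1 := elen len a b in let L2 := elen len c e in
  if (a == c) && (b == e) then `|s - t|
  else if (a == e) && (b == c) then `|s - (L2 - t)|
  else Num.min (Num.min (s + dV a c + t) (s + dV a e + (L2 - t)))
               (Num.min ((L1 - s) + dV b c + t) ((L1 - s) + dV b e + (L2 - t))).

Definition on_path (len : V -> V -> R) (dV : V -> V -> R) (p q x : point) : Prop :=
  tdist len dV p x + tdist len dV x q = tdist len dV p q.

Definition Ed (len : V -> V -> R) (dV : V -> V -> R) (n : nat) (m : 'I_n -> nat)
  (w : 'I_n -> R) (f : forall i, 'I_(m i) -> R) (loc : forall i, 'I_(m i) -> point)
  (x : point) (i : 'I_n) : R :=
  w i * \sum_(j < m i) f i j * tdist len dV x (loc i j).

Definition kcost (len : V -> V -> R) (dV : V -> V -> R) (n : nat) (hn : (0 < n)%N)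
  (m : 'I_n -> nat) (w : 'I_n -> R) (f : forall i, 'I_(m i) -> R)
  (loc : forall i, 'I_(m i) -> point) (k : nat) (hk : (0 < k)%N)
  (C : 'I_k -> point) : R :=
  let E := Ed len dV w f loc in
  let g := fun i => \big[Num.min/E (C (Ordinal hk)) i]_(j < k) E (C j) i in
  \big[Num.max/g (Ordinal hn)]_(i < n) g i.

End TreeDefs.

(* Main.v *)
Require Import Defs.
From HB Require Import structures.
From mathcomp Require Import all_boot all_order all_algebra.
From mathcomp Require Import ring lra.
From Stdlib Require Import Classical.
Set Implicit Arguments. Unset Strict Implicit. Unset Printing Implicit Defensive.
Import Order.TTheory GRing.Theory Num.Theory.
Local Open Scope ring_scope.

Definition F4 (R : realFieldType) (T : Type) (d : T -> T -> R) x y z w :=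
  d x y + d z w <= d x z + d y w \/ d x y + d z w <= d x w + d y z.

Section Vert.
Variables (R : realFieldType) (V : finType) (adj : rel V) (len : V -> V -> R)
  (dV : V -> V -> R).
Hypothesis Htree : is_wtree adj len.
Hypothesis HdV : is_vdist adj len dV.

Let sp := simple_path adj.

Lemma adj_sym u v : adj u v = adj v u.
Proof. by case: Htree. Qed.
Lemma adj_irr u : ~~ adj u u.
Proof. by case: Htree. Qed.
Lemma len_sym u v : len u v = len v u.
Proof. by case: Htree. Qed.
Lemma len_pos u v : adj u v -> 0 < len u v.
Proof. by case: Htree => _ _ _ H _; apply: H. Qed.
Lemma ex_sp u v : exists p, sp u v p.
Proof. by case: Htree => _ _ _ _ [H _]; apply: H. Qed.
Lemma uniq_sp u v p q : sp u v p -> sp u v q -> p = q.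
Proof. by case: Htree => _ _ _ _ [_ H]; apply: H. Qed.

Lemma pathlen_nil u : pathlen len u [::] = 0.
Proof. by rewrite /pathlen big_nil. Qed.
Lemma pathlen_cons u v p : pathlen len u (v :: p) = len u v + pathlen len v p.
Proof. by rewrite /pathlen /= big_cons. Qed.
Lemma pathlen_cat u p q :
  pathlen len u (p ++ q) = pathlen len u p + pathlen len (last u p) q.
Proof.
elim: p u => [|x p IH] u /=; first by rewrite pathlen_nil add0r.
by rewrite !pathlen_cons IH addrA.
Qed.
Lemma pathlen_rcons u p v :
  pathlen len u (rcons p v) = pathlen len u p + len (last u p) v.
Proof. by rewrite -cats1 pathlen_cat pathlen_cons pathlen_nil addr0. Qed.

Lemma last_rev_belast (x : V) p : last (last x p) (rev (belast x p)) = x.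
Proof.
have -> : last (last x p) (rev (belast x p)) = last x ((last x p) :: rev (belast x p)) by [].
by rewrite -rev_rcons -lastI rev_cons last_rcons.
Qed.

Lemma pathlen_rev x p :
  pathlen len (last x p) (rev (belast x p)) = pathlen len x p.
Proof.
elim: p x => [|y p IH] x /=; first by [].
rewrite rev_cons pathlen_rcons IH pathlen_cons last_rev_belast len_sym addrC.
by [].
Qed.

Lemma sp_rev u v p : sp u v p -> sp v u (rev (belast u p)).
Proof.
case/and3P => Hp /eqP Hl Hu; apply/and3P; split.
- rewrite -Hl rev_path; apply: sub_path Hp => a b; by rewrite adj_sym.
- by rewrite -Hl last_rev_belast.
- by rewrite -Hl -rev_rcons -lastI rev_uniq.
Qed.

Lemma mem_sp_rev u p (z : V) :
  (z \in last u p :: rev (belast u p)) = (z \in u :: p).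
Proof. by rewrite -rev_rcons -lastI mem_rev. Qed.

Lemma dV_sym u v : dV u v = dV v u.
Proof.
have [p Hp] := ex_sp u v.
rewrite (HdV Hp) (HdV (sp_rev Hp)).
by case/and3P: Hp => _ /eqP <- _; rewrite pathlen_rev.
Qed.

Lemma dV0 u : dV u u = 0.
Proof.
have Hp : sp u u [::] by rewrite /sp /simple_path /= eqxx.
by rewrite (HdV Hp) pathlen_nil.
Qed.

Lemma sp_edge u v : adj u v -> sp u v [:: v].
Proof.
move=> H; rewrite /sp /simple_path /= H eqxx /= inE andbT.
by apply/eqP => E; move: H; rewrite E (negbTE (adj_irr v)).
Qed.

Lemma dV_edge u v : adj u v -> dV u v = len u v.
Proof. by move=> H; rewrite (HdV (sp_edge H)) pathlen_cons pathlen_nil addr0. Qed.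

Lemma pathlen_ge0 u p : path adj u p -> 0 <= pathlen len u p.
Proof.
elim: p u => [|x p IH] u /=; first by rewrite pathlen_nil.
case/andP => H1 H2; rewrite pathlen_cons addr_ge0 ?IH //.
exact/ltW/len_pos.
Qed.

Lemma dV_ge0 u v : 0 <= dV u v.
Proof.
have [p Hp] := ex_sp u v; rewrite (HdV Hp).
by case/and3P: Hp => H _ _; apply: pathlen_ge0.
Qed.

Lemma dV_eq0 u v : dV u v = 0 -> u = v.
Proof.
have [p Hp] := ex_sp u v; rewrite (HdV Hp).
case/and3P: Hp; case: p => [|x p] /=; first by move=> _ /eqP.
case/andP=> H1 H2 _ _; rewrite pathlen_cons => E; exfalso.
have := len_pos H1; have := pathlen_ge0 H2; lra.
Qed.

Lemma sp_split u v p z : sp u v p -> z \in u :: p ->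
  exists p1 p2, [/\ p = p1 ++ p2, sp u z p1, sp z v p2 &
     pathlen len u p = pathlen len u p1 + pathlen len z p2].
Proof.
move=> Hp Hz; case/splitPl: Hz Hp => p1 p2 Hz Hp; subst z; exists p1, p2.
case/and3P: Hp; rewrite cat_path last_cat -cat_cons cat_uniq => /andP [H1 H2] Hl /and3P [U1 D U2].
split => //.
- by apply/and3P; split.
- apply/and3P; split => //.
  rewrite /= U2 andbT; apply/negP => Hin; move/negP: D; apply.
  by apply/hasP; exists (last u p1) => //; exact: mem_last.
- by rewrite pathlen_cat.
Qed.

Lemma dV_split u v p z : sp u v p -> z \in u :: p -> dV u v = dV u z + dV z v.
Proof.
move=> Hp Hz; have [p1 [p2 [_ H1 H2 E]]] := sp_split Hp Hz.
by rewrite (HdV Hp) (HdV H1) (HdV H2).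
Qed.


Lemma sp_tail y w y1 p : sp y w (y1 :: p) -> adj y y1 /\ sp y1 w p.
Proof.
case/and3P => /= /andP [H1 H2] Hl /andP [_ U]; split => //.
by apply/and3P.
Qed.

Lemma sp_rcons u p x : sp u (last u p) p -> adj (last u p) x -> x \notin u :: p ->
  sp u x (rcons p x).
Proof.
case/and3P => Hp _ U Ha Hx; apply/and3P; split.
- by rewrite rcons_path Hp Ha.
- by rewrite last_rcons.
- by rewrite -rcons_cons rcons_uniq Hx U.
Qed.

Lemma EP x x' u : adj x x' ->
  dV u x' = dV u x + len x x' \/ dV u x = dV u x' + len x x'.
Proof.
move=> Hxx'; have [p Hp] := ex_sp u x'.
case Hin: (x \in u :: p).
- left; by rewrite (dV_split Hp Hin) (dV_edge Hxx').
- right; have Hl : last u p = x' by case/and3P: Hp => _ /eqP.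
  have Hp2 : sp u x (rcons p x).
    apply: sp_rcons; rewrite ?Hl // ?Hin //; last by rewrite adj_sym.
  rewrite (HdV Hp2) pathlen_rcons -(HdV Hp) Hl len_sym //.
Qed.

Lemma tri z y w : dV z w <= dV z y + dV y w.
Proof.
have [p Hp] := ex_sp y w.
elim: p y Hp => [|y1 p IH] y Hp.
  by case/and3P: Hp => _ /= /eqP -> _; rewrite dV0 addr0.
have [H1 H2] := sp_tail Hp.
have E : dV y w = len y y1 + dV y1 w by rewrite (HdV Hp) (HdV H2) pathlen_cons.
have := IH _ H2; rewrite E; case: (EP z H1) => ->; have := len_pos H1; lra.
Qed.

Lemma Sep x x' y w : adj x x' ->
  dV y x = dV y x' + len x x' -> dV w x' = dV w x + len x x' ->
  dV y w = dV y x + dV x w.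
Proof.
move=> Hxx' Hy Hw; have L0 := len_pos Hxx'.
have [q1 Hq1] := ex_sp y x'; have [r Hr] := ex_sp x w.
have Lq : last y q1 = x' by case/and3P: Hq1 => _ /eqP.
have Hx : x \notin y :: q1.
  apply/negP => Hin; have := dV_split Hq1 Hin; rewrite (dV_edge Hxx'); lra.
have Hq2 : sp y x (rcons q1 x).
  by apply: sp_rcons; rewrite ?Lq // adj_sym.
have Hq : sp y w (q1 ++ x :: r).
  case/and3P: (Hq1) => P1 _ U1; case/and3P: (Hr) => P2 /eqP L2 U2.
  apply/and3P; split.
  - by rewrite cat_path P1 /= Lq adj_sym Hxx'.
  - by rewrite last_cat /= L2.
  - rewrite -cat_cons cat_uniq U1 U2 andbT.
    apply/hasP => -[v Hv1 Hv2].
    have Hv2' : v \in y :: q1 by [].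
    have E1 := dV_split Hq1 Hv2'.
    have E2 := dV_split Hr Hv1.
    have T1 := tri y v x; have T2 := tri w v x'.
    case: (EP v Hxx') => Ev.
    + lra.
    + have S1 := dV_sym w x; have S2 := dV_sym w v; have S3 := dV_sym x v; lra.
rewrite (HdV Hq) pathlen_cat Lq pathlen_cons -(HdV Hq1) -(HdV Hr).
rewrite Hy; have := len_sym x x'; lra.
Qed.

Lemma F4V x y z w : F4 dV x y z w.
Proof.
have [p Hp] := ex_sp x y.
elim: p x Hp => [|x1 p IH] x Hp.
  case/and3P: Hp => _ /= /eqP <- _; rewrite /F4 dV0 add0r; left.
  by rewrite (dV_sym x z); apply: tri.
have [H1 H2] := sp_tail Hp.
have E : dV x y = len x x1 + dV x1 y by rewrite (HdV Hp) (HdV H2) pathlen_cons.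
have L0 := len_pos H1.
have Hy : dV y x = dV y x1 + len x x1 by rewrite dV_sym E dV_sym addrC.
have IH' := IH _ H2; rewrite /F4 in IH' *.
have Sxz := dV_sym x z; have Sxw := dV_sym x w; have Sx1z := dV_sym x1 z.
have Sx1w := dV_sym x1 w; have Syz := dV_sym y z; have Syw := dV_sym y w.
have Szw := dV_sym z w; have Sxy := dV_sym x y.
case: (EP z H1) => Ez; case: (EP w H1) => Ew.
- have := Sep H1 Hy Ez; have := Sep H1 Hy Ew; have := tri z x w; left; lra.
- have := Sep H1 Hy Ez; have := Sep H1 Ew Ez; right; lra.
- have := Sep H1 Hy Ew; have := Sep H1 Ez Ew; left; lra.
- by case: IH' => ?; [left|right]; lra.
Qed.

Lemma mixed_side a b c e : adj a b -> adj c e ->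
  dV c b = dV c a + len a b -> dV e a = dV e b + len a b -> a = c /\ b = e.
Proof.
move=> Hab Hce Hc He.
have L0 := len_pos Hab; have L2 := len_pos Hce.
have Dce : dV c e = len c e by rewrite dV_edge.
have Sce := dV_sym c e; have Sac := dV_sym a c; have Sae := dV_sym a e.
have Sbc := dV_sym b c; have Sbe := dV_sym b e.
have G1 := dV_ge0 e b; have G2 := dV_ge0 a c; have G3 := dV_ge0 a e.
have G4 := dV_ge0 b c; have G5 := dV_ge0 b e.
have Hac : a = c.
  have S1 := Sep Hab He Hc.
  case: (EP a Hce) => E.
  - apply: dV_eq0; lra.
  - have : a = e by apply: dV_eq0; lra.
    move=> Eae; subst e; exfalso; move: He; rewrite dV0; lra.
subst c; split => //.
have Hba : adj b a by rewrite adj_sym.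
have Hc' : dV a b = dV a a + len b a by rewrite dV0 add0r (dV_edge Hab) len_sym.
have He' : dV e a = dV e b + len b a by rewrite He len_sym.
have S1 := Sep Hba Hc' He'.
case: (EP b Hce) => E.
- have : b = a by apply: dV_eq0; lra.
  by move=> Eba; move: Hab; rewrite Eba (negbTE (adj_irr a)).
- apply: dV_eq0; lra.
Qed.

End Vert.


Section Alg.
Variable R : realFieldType.
Lemma mincase (x y : R) : (Num.min x y = x /\ x <= y) \/ (Num.min x y = y /\ y <= x).
Proof.
rewrite /Num.min; case: (ltrP x y) => H; [left|right]; split => //; exact: ltW.
Qed.
Lemma normcase (x : R) : (`|x| = x /\ 0 <= x) \/ (`|x| = - x /\ x <= 0).
Proof.
case: (lerP 0 x) => H; [left; split => //; exact: ger0_norm | right; split; [exact: ltr0_norm|exact: ltW]].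
Qed.
End Alg.

Ltac dmin1 a b := let E := fresh "E" in
     case: (mincase a b) => [[E ?]|[E ?]]; rewrite ?E; (repeat match goal with H : context [Num.min a b] |- _ => rewrite E in H end); clear E.
Ltac dnorm1 a := let E := fresh "E" in
     case: (normcase a) => [[E ?]|[E ?]]; rewrite ?E; (repeat match goal with H : context [Num.norm a] |- _ => rewrite E in H end); clear E.
Ltac dmin := repeat match goal with
 | |- context [Num.min ?a ?b] => dmin1 a b
 | H : context [Num.min ?a ?b] |- _ => dmin1 a b
 | |- context [Num.norm ?a] => dnorm1 a
 | H : context [Num.norm ?a] |- _ => dnorm1 a
 end.

Lemma minAC4 (R : realFieldType) (p q r u : R) :
  Num.min (Num.min p q) (Num.min r u) = Num.min (Num.min p r) (Num.min q u).
Proof. dmin; lra. Qed.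


Section Alg2.
Variable R : realFieldType.
Implicit Types s t L M ac ae bc be : R.
Lemma alg_aa_x s t L M ac ae bc be : 0 <= s <= L -> bc = ac + L -> be = ae + L ->
  Num.min (Num.min (s + ac + t) (s + ae + (M - t)))
          (Num.min (L - s + bc + t) (L - s + be + (M - t))) =
  `|s - 0| + Num.min (ac + t) (ae + (M - t)).
Proof. move=> /andP [? ?] -> ->; dmin; lra. Qed.
Lemma alg_aa_b t L M ac ae bc be : bc = ac + L -> be = ae + L ->
  Num.min (bc + t) (be + (M - t)) = L - 0 + Num.min (ac + t) (ae + (M - t)).
Proof. move=> -> ->; dmin; lra. Qed.
Lemma alg_bb_x s t L M ac ae bc be : 0 <= s <= L -> ac = bc + L -> ae = be + L ->
  Num.min (Num.min (s + ac + t) (s + ae + (M - t)))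
          (Num.min (L - s + bc + t) (L - s + be + (M - t))) =
  `|s - L| + Num.min (bc + t) (be + (M - t)).
Proof. move=> /andP [? ?] -> ->; dmin; lra. Qed.
Lemma alg_bb_a t L M ac ae bc be : ac = bc + L -> ae = be + L ->
  Num.min (ac + t) (ae + (M - t)) = L + Num.min (bc + t) (be + (M - t)).
Proof. move=> -> ->; dmin; lra. Qed.
Lemma alg_v_a s L ac bc : 0 <= s <= L -> bc = ac + L ->
  Num.min (Num.min (s + ac + 0) (s + ac + (0 - 0)))
     (Num.min (L - s + bc + 0) (L - s + bc + (0 - 0))) = `|s - 0| + ac.
Proof. move=> /andP [? ?] ->; dmin; lra. Qed.
Lemma alg_v_b s L ac bc : 0 <= s <= L -> ac = bc + L ->
  Num.min (Num.min (s + ac + 0) (s + ac + (0 - 0)))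
     (Num.min (L - s + bc + 0) (L - s + bc + (0 - 0))) = `|s - L| + bc.
Proof. move=> /andP [? ?] ->; dmin; lra. Qed.
Lemma alg_e1 t L : 0 <= t <= L -> Num.min (0 + t) (L + (L - t)) = t + 0.
Proof. move=> /andP [? ?]; dmin; lra. Qed.
Lemma alg_e2 t L : 0 <= t <= L -> Num.min (L + t) (0 + (L - t)) = L - t + 0.
Proof. move=> /andP [? ?]; dmin; lra. Qed.
Lemma min_ge0 x y : 0 <= x -> 0 <= y -> 0 <= Num.min x y :> R.
Proof. move=> ? ?; dmin; lra. Qed.
End Alg2.

Section Pts.
Variables (R : realFieldType) (V : finType) (adj : rel V) (len : V -> V -> R)
  (dV : V -> V -> R).
Hypothesis Htree : is_wtree adj len.
Hypothesis HdV : is_vdist adj len dV.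

Local Notation d := (tdist len dV).
Local Notation vp := (vpt R).
Local Notation valid := (valid_pt adj len).

Lemma elen_sym a b : elen len a b = elen len b a.
Proof. by rewrite /elen eq_sym; case: eqP => // _; rewrite (len_sym Htree). Qed.
Lemma elen_adj a b : adj a b -> elen len a b = len a b.
Proof.
move=> H; rewrite /elen; case: eqP => // E; move: H; rewrite E.
by rewrite (negbTE (adj_irr Htree b)).
Qed.
Lemma elen0 a : elen len a a = 0.
Proof. by rewrite /elen eqxx. Qed.

Lemma tdist_sym x y : d x y = d y x.
Proof.
case: x => a b s; case: y => c e t; rewrite /tdist.
rewrite (eq_sym c a) (eq_sym e b) (eq_sym c b) (eq_sym e a).
case: ifP => [_|_]; first by rewrite distrC.
rewrite [(b == c) && _]andbC; case: ifP => [/andP [/eqP Hae /eqP Hbc]|_].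
  subst; rewrite elen_sym; congr (Num.norm _); ring.
rewrite (dV_sym Htree HdV c a) (dV_sym Htree HdV c b) (dV_sym Htree HdV e a).
rewrite (dV_sym Htree HdV e b) minAC4.
by congr (Num.min (Num.min _ _) (Num.min _ _)); ring.
Qed.

Lemma tdist_xx x : d x x = 0.
Proof. by case: x => a b s; rewrite /tdist !eqxx /= subrr normr0. Qed.

Lemma tdist_vv a b : d (vp a) (vp b) = dV a b.
Proof.
rewrite /tdist /vpt /=; case: (a =P b) => [->|H].
  by rewrite /= subrr normr0 (dV0 HdV).
rewrite /= !elen0; dmin; lra.
Qed.

Lemma tdist_v_edge u c e t : adj c e ->
  d (vp u) (Pt c e t) = Num.min (dV u c + t) (dV u e + (len c e - t)).
Proof.
move=> Hce; have Hne : c != e by apply/eqP => E; move: Hce; rewrite E (negbTE (adj_irr Htree e)).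
rewrite /tdist /vpt /=.
rewrite (_ : (u == c) && (u == e) = false); last first.
  by apply/andP => -[/eqP E1 /eqP E2]; move: Hne; rewrite -E1 -E2 eqxx.
rewrite (_ : (u == e) && (u == c) = false); last first.
  by apply/andP => -[/eqP E1 /eqP E2]; move: Hne; rewrite -E1 -E2 eqxx.
rewrite elen0 (elen_adj Hce); dmin; lra.
Qed.

Lemma tdist_edge a b s y : adj a b -> 0 <= s <= len a b -> valid y ->
  exists pi rho, [/\ 0 <= pi <= len a b, 0 <= rho, d (vp a) y = pi + rho,
     d (vp b) y = len a b - pi + rho & d (Pt a b s) y = `|s - pi| + rho].
Proof.
move=> Hab Hs.
have Hne : a != b by apply/eqP => E; move: Hab; rewrite E (negbTE (adj_irr Htree b)).
have L0 := len_pos Htree Hab.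
have Sab := dV_sym Htree HdV a b; have Dab := dV_edge Htree HdV Hab.
have Lab := len_sym Htree a b.
have D0a := dV0 HdV a; have D0b := dV0 HdV b.
case: y => c e t [[Hce Ht] | [Hce Ht]]; rewrite /pa /pb /ps in Hce Ht.
- have L2 := len_pos Htree Hce.
  have Ha := tdist_v_edge a t Hce; have Hb := tdist_v_edge b t Hce.
  case E1: ((a == c) && (b == e)).
    move/andP: E1 => [/eqP E1 /eqP E2]; subst c e.
    exists t, 0; rewrite Ha Hb /tdist !eqxx /= addr0 D0a D0b -Sab Dab.
    rewrite alg_e1 // alg_e2 //; split => //; lra.
  case E2: ((a == e) && (b == c)).
    move/andP: E2 => [/eqP E3 /eqP E4]; subst c e.
    exists (len b a - t), 0; rewrite Ha Hb /tdist !eqxx /= (negbTE Hne) /=.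
    rewrite elen_sym (elen_adj Hab) D0a D0b -Sab Dab -Lab addr0.
    split; [lra|lra|rewrite alg_e2 //; lra|rewrite alg_e1 //; lra|lra].
  have Sac := dV_sym Htree HdV a c; have Sae := dV_sym Htree HdV a e.
  have Sbc := dV_sym Htree HdV b c; have Sbe := dV_sym Htree HdV b e.
  have Hx : d (Pt a b s) (Pt c e t) = Num.min (Num.min (s + dV a c + t) (s + dV a e + (len c e - t)))
     (Num.min (len a b - s + dV b c + t) (len a b - s + dV b e + (len c e - t))).
    by rewrite /tdist E1 E2 (elen_adj Hab) (elen_adj Hce).
  have G1 := dV_ge0 Htree HdV a c; have G2 := dV_ge0 Htree HdV a e.
  have G3 := dV_ge0 Htree HdV b c; have G4 := dV_ge0 Htree HdV b e.
  case/andP: Ht => Ht1 Ht2.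
  case: (EP Htree HdV c Hab) => Ec; case: (EP Htree HdV e Hab) => Ee.
  + exists 0, (Num.min (dV a c + t) (dV a e + (len c e - t))).
    rewrite Ha Hb Hx (@alg_aa_x _ s t (len a b) (len c e) (dV a c) (dV a e) (dV b c) (dV b e)) //; try lra.
    rewrite (@alg_aa_b _ t (len a b) (len c e) (dV a c) (dV a e) (dV b c) (dV b e)); try lra.
    split; [lra|apply: min_ge0; lra|lra|lra|lra].
  + have [E3 E4] := mixed_side Htree HdV Hab Hce Ec Ee.
    by move: E1; rewrite E3 E4 !eqxx.
  + have Hec : adj e c by rewrite (adj_sym Htree).
    have [E3 E4] := mixed_side Htree HdV Hab Hec Ee Ec.
    by move: E2; rewrite E3 E4 !eqxx.
  + exists (len a b), (Num.min (dV b c + t) (dV b e + (len c e - t))).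
    rewrite Ha Hb Hx (@alg_bb_x _ s t (len a b) (len c e) (dV a c) (dV a e) (dV b c) (dV b e)) //; try lra.
    rewrite (@alg_bb_a _ t (len a b) (len c e) (dV a c) (dV a e) (dV b c) (dV b e)); try lra.
    split; [lra|apply: min_ge0; lra|lra|lra|lra].
- subst e t.
  have Sac := dV_sym Htree HdV a c; have Sbc := dV_sym Htree HdV b c.
  have G1 := dV_ge0 Htree HdV a c; have G3 := dV_ge0 Htree HdV b c.
  have Hx : d (Pt a b s) (vp c) = Num.min (Num.min (s + dV a c + 0) (s + dV a c + (0 - 0)))
     (Num.min (len a b - s + dV b c + 0) (len a b - s + dV b c + (0 - 0))).
    rewrite /tdist /vpt.
    rewrite (_ : (a == c) && (b == c) = false); last first.
      by apply/andP => -[/eqP E1 /eqP E2]; move: Hne; rewrite E1 E2 eqxx.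
    by rewrite /= elen0 (elen_adj Hab).
  change (Pt c c 0) with (vp c); rewrite !tdist_vv.
  case: (EP Htree HdV c Hab) => Ec.
  + exists 0, (dV a c); rewrite Hx (@alg_v_a _ s (len a b) (dV a c) (dV b c)) //; try lra.
    split; lra.
  + exists (len a b), (dV b c); rewrite Hx (@alg_v_b _ s (len a b) (dV a c) (dV b c)) //; try lra.
    split; lra.
Qed.

End Pts.


Lemma AIL (R : realFieldType) (s L py ry pz rz pw rw Dyz Dyw Dzw : R) :
  0 <= s <= L ->
  (py + ry + Dzw <= pz + rz + Dyw \/ py + ry + Dzw <= pw + rw + Dyz) ->
  (L - py + ry + Dzw <= L - pz + rz + Dyw \/ L - py + ry + Dzw <= L - pw + rw + Dyz) ->
  (`|s - py| + ry + Dzw <= `|s - pz| + rz + Dyw \/ `|s - py| + ry + Dzw <= `|s - pw| + rw + Dyz).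
Proof.
move=> /andP [Hs1 Hs2] Fa Fb.
case: (lerP (`|s - py| + ry + Dzw) (`|s - pz| + rz + Dyw)) => h1; first by left.
case: (lerP (`|s - py| + ry + Dzw) (`|s - pw| + rw + Dyz)) => h2; first by right.
exfalso; dmin; case: Fa => ?; case: Fb => ?; lra.
Qed.

Section PF.
Variables (R : realFieldType) (V : finType) (adj : rel V) (len : V -> V -> R)
  (dV : V -> V -> R).
Hypothesis Htree : is_wtree adj len.
Hypothesis HdV : is_vdist adj len dV.

Local Notation d := (tdist len dV).
Local Notation vp := (vpt R).
Local Notation valid := (valid_pt adj len).

Lemma valid_vp u : valid (vp u).
Proof. by right. Qed.

Lemma valid_vert x : valid x -> pa x = pb x -> x = vp (pa x).
Proof.
case: x => a b s [[/= H _]|[/= E E2]] /= E3.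
  by move: H; rewrite E3 (negbTE (adj_irr Htree b)).
by rewrite E2 E3.
Qed.

Lemma valid_edge x : valid x -> pa x != pb x ->
  adj (pa x) (pb x) /\ 0 <= ps x <= len (pa x) (pb x).
Proof. by case=> [//|[E _]]; rewrite E eqxx. Qed.

Lemma F4_swap12 x y z w : F4 d y x z w -> F4 d x y z w.
Proof.
rewrite /F4 !(tdist_sym Htree HdV y) => -[H|H]; [right|left]; lra.
Qed.

Lemma F4_swapp x y z w : F4 d z w x y -> F4 d x y z w.
Proof.
rewrite /F4 (tdist_sym Htree HdV z x) (tdist_sym Htree HdV w y)
  (tdist_sym Htree HdV z y) (tdist_sym Htree HdV w x) => -[H|H]; [left|right]; lra.
Qed.

Definition nv (x : point R V) : nat := pa x != pb x.

Lemma F4_step x y z w : valid x -> valid y -> valid z -> valid w -> pa x != pb x ->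
  F4 d (vp (pa x)) y z w -> F4 d (vp (pb x)) y z w -> F4 d x y z w.
Proof.
move=> Vx Vy Vz Vw Hn Fa Fb.
have [Hab Hs] := valid_edge Vx Hn.
case: x Vx Hn Fa Fb Hab Hs => a b s /= Vx Hn Fa Fb Hab Hs.
have [py [ry [_ _ Ay By Xy]]] := tdist_edge Htree HdV Hab Hs Vy.
have [pz [rz [_ _ Az Bz Xz]]] := tdist_edge Htree HdV Hab Hs Vz.
have [pw [rw [_ _ Aw Bw Xw]]] := tdist_edge Htree HdV Hab Hs Vw.
move: Fa Fb; rewrite /F4 Xy Xz Xw Ay Az Aw By Bz Bw => Fa Fb.
exact: AIL Hs Fa Fb.
Qed.

Lemma F4_lift x y z w : valid x -> valid y -> valid z -> valid w ->
  (forall a, F4 d (vp a) y z w) -> F4 d x y z w.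
Proof.
move=> Vx Vy Vz Vw H.
case E: (pa x != pb x); first by apply: F4_step.
rewrite (valid_vert Vx); first exact: H.
by apply/eqP; apply/negbFE.
Qed.

Lemma pF4 x y z w : valid x -> valid y -> valid z -> valid w -> F4 d x y z w.
Proof.
move=> Vx Vy Vz Vw; apply: F4_lift => // a.
apply: F4_swap12; apply: F4_lift => //; try exact: valid_vp; move=> b.
apply: F4_swapp; apply: F4_lift => //; try exact: valid_vp; move=> c.
apply: F4_swap12; apply: F4_lift => //; try exact: valid_vp; move=> e.
rewrite /F4 !(tdist_vv HdV); exact: (F4V Htree HdV).
Qed.

End PF.


Section Alg3.
Variable R : realFieldType.
Lemma n1 (s t : R) : 0 <= t -> `|s - (s + t)| = t.
Proof. move=> ?; dmin; lra. Qed.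
Lemma n2 (s t : R) : 0 <= t -> `|s - (s - t)| = t.
Proof. move=> ?; dmin; lra. Qed.
Lemma n3 (s t pi rho : R) : 0 <= t -> s + t <= pi -> `|s + t - pi| + rho = `|s - pi| + rho - t.
Proof. move=> ? ?; dmin; lra. Qed.
Lemma n4 (s t pi rho : R) : 0 <= t -> pi <= s - t -> `|s - t - pi| + rho = `|s - pi| + rho - t.
Proof. move=> ? ?; dmin; lra. Qed.
Lemma n5 (t : R) : 0 <= t -> `|t - 0| + 0 = t.
Proof. move=> ?; dmin; lra. Qed.
Lemma n6 (t L rho : R) : t <= L -> `|t - L| + rho = L + rho - t.
Proof. move=> ?; dmin; lra. Qed.
End Alg3.
Section Geo.
Variables (R : realFieldType) (V : finType) (adj : rel V) (len : V -> V -> R)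
  (dV : V -> V -> R).
Hypothesis Htree : is_wtree adj len.
Hypothesis HdV : is_vdist adj len dV.

Local Notation d := (tdist len dV).
Local Notation vp := (vpt R).
Local Notation valid := (valid_pt adj len).

Lemma ptri x y z : valid x -> valid y -> valid z -> d x z <= d x y + d y z.
Proof.
move=> Vx Vy Vz; have := pF4 Htree HdV Vx Vz Vy Vy.
rewrite /F4 tdist_xx (tdist_sym Htree HdV z y); case; lra.
Qed.

Lemma pd_ge0 x y : valid x -> valid y -> 0 <= d x y.
Proof.
move=> Vx Vy; have := ptri Vx Vy Vx; rewrite tdist_xx (tdist_sym Htree HdV y x); lra.
Qed.

Lemma conv c x p y t : valid c -> valid x -> valid p -> valid y ->
  0 <= t -> d c x = t -> d x p = d c p - t ->
  d c p * d x y <= (d c p - t) * d c y + t * d p y.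
Proof.
move=> Vc Vx Vp Vy Ht Hcx Hxp.
have T1 := ptri Vx Vc Vy; have T2 := ptri Vx Vp Vy.
have B0 := pd_ge0 Vx Vp.
have S1 := tdist_sym Htree HdV x c; have S2 := tdist_sym Htree HdV y p.
have S3 := tdist_sym Htree HdV y c; have S4 := tdist_sym Htree HdV p y.
case: (pF4 Htree HdV Vx Vy Vc Vp) => H.
- have h1 : d x y <= d p y - (d c p - t) by lra.
  have h2 : d x y <= t + d c y by lra.
  have := ler_wpM2l Ht h1; have := ler_wpM2l B0 h2; rewrite Hxp; nra.
- have h1 : d x y <= d c y - t by lra.
  have h2 : d x y <= (d c p - t) + d p y by lra.
  have := ler_wpM2l B0 h1; have := ler_wpM2l Ht h2; rewrite Hxp; nra.
Qed.

Lemma gromov c x p q t : valid c -> valid x -> valid p -> valid q ->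
  d c x = t -> d x p = d c p - t -> d p q + 2 * t < d c p + d c q ->
  d x q = d c q - t.
Proof.
move=> Vc Vx Vp Vq Hcx Hxp Hg.
have T1 := ptri Vc Vx Vq; have T2 := ptri Vx Vc Vq.
have S1 := tdist_sym Htree HdV x c; have S2 := tdist_sym Htree HdV q p.
have S3 := tdist_sym Htree HdV q c.
case: (pF4 Htree HdV Vx Vq Vc Vp) => H; lra.
Qed.

Lemma ptransfer c u y : valid c -> valid y -> d c (vp u) = 0 -> d c y = d (vp u) y.
Proof.
move=> Vc Vy H0.
have V0 : valid (vp u) by right.
have := ptri Vc V0 Vy; have := ptri V0 Vc Vy.
rewrite (tdist_sym Htree HdV (vp u) c) H0; lra.
Qed.

Lemma edge_vp_dist a b s u : adj a b -> 0 <= s <= len a b ->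
  d (Pt a b s) (vp u) = `|s - (dV a u - dV b u + len a b) / 2| + (dV a u + dV b u - len a b) / 2.
Proof.
move=> Hab Hs; have [pi [rho [_ _ Ha Hb Hx]]] := tdist_edge Htree HdV Hab Hs (valid_vp adj len u).
rewrite !(tdist_vv HdV) in Ha Hb; rewrite Hx Ha Hb.
have -> : (pi + rho - (len a b - pi + rho) + len a b) / 2 = pi by field.
by congr (_ + _); field.
Qed.

Lemma edge_vp_side a b u : adj a b ->
  (dV a u - dV b u + len a b) / 2 = 0 \/ (dV a u - dV b u + len a b) / 2 = len a b.
Proof.
move=> Hab; have Sa := dV_sym Htree HdV u a; have Sb := dV_sym Htree HdV u b.
case: (EP Htree HdV u Hab) => E; [left|right]; rewrite -Sa -Sb E; by field.
Qed.

Lemma geo_v u v : 0 < dV u v -> exists e, 0 < e /\ forall t, 0 < t <= e ->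
  exists x, [/\ valid x, d (vp u) x = t & d x (vp v) = dV u v - t].
Proof.
move=> Hpos; have [p Hp] := ex_sp Htree u v.
case: p Hp => [|u1 p] Hp.
  by case/and3P: Hp => _ /= /eqP E _; move: Hpos; rewrite E (dV0 HdV) ltxx.
have [H1 H2] := sp_tail Hp.
have E : dV u v = len u u1 + dV u1 v by rewrite (HdV Hp) (HdV H2) pathlen_cons.
have L0 := len_pos Htree H1.
exists (len u u1); split => // t /andP [Ht1 Ht2].
have Hs : 0 <= t <= len u u1 by rewrite Ht2 ltW.
exists (Pt u u1 t); split.
- by left.
- have H1' : adj u1 u by rewrite (adj_sym Htree).
  rewrite (tdist_sym Htree HdV) edge_vp_dist // (dV0 HdV) (dV_edge Htree HdV H1') (len_sym Htree u1 u).
  have -> : (0 - len u u1 + len u u1) / 2 = 0 by field.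
  have -> : (0 + len u u1 - len u u1) / 2 = 0 by field.
  by rewrite n5 // ltW.
- rewrite edge_vp_dist // E.
  have -> : (len u u1 + dV u1 v - dV u1 v + len u u1) / 2 = len u u1 by field.
  have -> : (len u u1 + dV u1 v + dV u1 v - len u u1) / 2 = dV u1 v by field.
  by rewrite n6.
Qed.

Lemma geo c v : valid c -> 0 < d c (vp v) -> exists e, 0 < e /\ forall t, 0 < t <= e ->
  exists x, [/\ valid x, d c x = t & d x (vp v) = d c (vp v) - t].
Proof.
move=> Vc Hpos.
have Hvert u : d c (vp u) = 0 -> exists e, 0 < e /\ forall t, 0 < t <= e ->
    exists x, [/\ valid x, d c x = t & d x (vp v) = d c (vp v) - t].
  move=> H0; have Hv := ptransfer Vc (valid_vp adj len v) H0.
  rewrite Hv (tdist_vv HdV) in Hpos *.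
  have [e [He Hx]] := geo_v Hpos; exists e; split => // t Ht.
  have [x [Vx Hux Hxv]] := Hx t Ht; exists x; split => //.
  by rewrite (ptransfer Vc Vx H0).
case E: (pa c != pb c); last first.
  apply: (Hvert (pa c)); rewrite (valid_vert Htree Vc); last by apply/eqP/negbFE.
  by rewrite tdist_xx.
have [Hab Hs] := valid_edge Vc E.
case: c Vc E Hpos Hvert Hab Hs => a b s Vc E Hpos Hvert Hab Hs.
rewrite /= in Hab Hs E.
have L0 := len_pos Htree Hab.
have Hd := edge_vp_dist v Hab Hs.
set pi := (dV a v - dV b v + len a b) / 2 in Hd; set rho := (dV a v + dV b v - len a b) / 2 in Hd.
have Hside := edge_vp_side v Hab; rewrite -/pi in Hside.
case/andP: (Hs) => Hs1 Hs2.
case: (ltrgtP s pi) => Hspi.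
- exists (pi - s); split; first lra.
  move=> t /andP [Ht1 Ht2].
  have Hs' : 0 <= s + t <= len a b by apply/andP; split; case: Hside => Hp; lra.
  exists (Pt a b (s + t)); split.
  + by left.
  + by rewrite /tdist !eqxx /= n1 // ltW.
  + rewrite Hd edge_vp_dist // -/pi -/rho n3 //; lra.
- exists (s - pi); split; first lra.
  move=> t /andP [Ht1 Ht2].
  have Hs' : 0 <= s - t <= len a b by apply/andP; split; case: Hside => Hp; lra.
  exists (Pt a b (s - t)); split.
  + by left.
  + by rewrite /tdist !eqxx /= n2 // ltW.
  + rewrite Hd edge_vp_dist // -/pi -/rho n4 //; lra.
- case: Hside => Hp.
  + apply: (Hvert a); rewrite edge_vp_dist // (dV0 HdV) (dV_sym Htree HdV b a)
      (dV_edge Htree HdV Hab).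
    have -> : (0 - len a b + len a b) / 2 = 0 by field.
    have -> : (0 + len a b - len a b) / 2 = 0 by field.
    by rewrite Hspi Hp subrr normr0 addr0.
  + apply: (Hvert b); rewrite edge_vp_dist // (dV0 HdV) (dV_edge Htree HdV Hab).
    have -> : (len a b - 0 + len a b) / 2 = len a b by field.
    have -> : (len a b + 0 - len a b) / 2 = 0 by field.
    by rewrite Hspi Hp subrr normr0 addr0.
Qed.

End Geo.


Lemma fin_pos (R : realFieldType) (I : finType) (P : pred I) (g : I -> R) :
  (forall i, P i -> 0 < g i) -> exists e, 0 < e /\ forall i, P i -> e <= g i.
Proof.
move=> H; exists (\big[Num.min/1]_(i | P i) g i); split.
  by apply: lt_bigmin => //; exact: ltr01.
by move=> i Pi; apply: bigmin_le_cond.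
Qed.

Unset Implicit Arguments.
Section Main.
Variables (R : realFieldType) (V : finType) (adj : rel V) (len : V -> V -> R)
  (dV : V -> V -> R).
Hypothesis Htree : is_wtree adj len.
Hypothesis HdV : is_vdist adj len dV.
Variables (n : nat) (m : 'I_n -> nat) (w : 'I_n -> R) (f : forall i, 'I_(m i) -> R)
  (loc : forall i, 'I_(m i) -> point R V).
Hypothesis Hw : forall i, 0 <= w i.
Hypothesis Hf : forall i j, 0 <= f i j.
Hypothesis Hf1 : forall i, \sum_(j < m i) f i j = 1.
Hypothesis Hloc : forall i j, valid_pt adj len (loc i j).

Local Notation d := (tdist len dV).
Local Notation vp := (vpt R).
Local Notation valid := (valid_pt adj len).
Local Notation E := (Ed len dV w f loc).

Lemma E_lip x y i : valid x -> valid y -> E x i <= E y i + w i * d x y.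
Proof.
move=> Vx Vy; rewrite /Ed -mulrDr; apply: ler_wpM2l => //.
rewrite -(mulr1 (d x y)) -(Hf1 i) mulr_sumr -big_split /=.
apply: ler_sum => j _.
have T := ptri Htree HdV Vx Vy (Hloc i j); have := Hf i j; nra.
Qed.

Lemma E_conv c x p i t : valid c -> valid x -> valid p -> 0 <= t ->
  d c x = t -> d x p = d c p - t ->
  d c p * E x i <= (d c p - t) * E c i + t * E p i.
Proof.
move=> Vc Vx Vp Ht Hcx Hxp.
have H : \sum_(j < m i) f i j * (d c p * d x (loc i j)) <=
         \sum_(j < m i) f i j * ((d c p - t) * d c (loc i j) + t * d p (loc i j)).
  apply: ler_sum => j _; apply: ler_wpM2l => //.
  have := conv Htree HdV Vc Vx Vp (Hloc i j) Ht Hcx Hxp. by [].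
have E1 : \sum_(j < m i) f i j * (d c p * d x (loc i j)) =
    d c p * \sum_(j < m i) f i j * d x (loc i j).
  by rewrite mulr_sumr; apply: eq_bigr => j _; ring.
have E2 : \sum_(j < m i) f i j * ((d c p - t) * d c (loc i j) + t * d p (loc i j)) =
    (d c p - t) * \sum_(j < m i) f i j * d c (loc i j) +
    t * \sum_(j < m i) f i j * d p (loc i j).
  by rewrite !mulr_sumr -big_split; apply: eq_bigr => j _ /=; ring.
rewrite E1 E2 in H; rewrite /Ed.
have := ler_wpM2l (Hw i) H; rewrite mulrDr !mulrA.
rewrite (mulrC (w i) (d c p)) (mulrC (w i) (d c p - t)) (mulrC (w i) t) -!mulrA.
by [].
Qed.

Variable pstar : 'I_n -> V.
Hypothesis Hpstar : forall i x, valid x -> E (vp (pstar i)) i <= E x i.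

Lemma main_contra (hn : (0 < n)%N) k (hk : (1 <= k)%N) lam (C : 'I_k -> point R V) :
  (forall j, valid (C j)) -> kcost len dV hn w f loc hk C = lam ->
  (forall C' : 'I_k -> point R V, (forall j, valid (C' j)) ->
     lam <= kcost len dV hn w f loc hk C') ->
  (forall i, lam <> E (vp (pstar i)) i) ->
  (forall i j c, valid c -> on_path len dV (vp (pstar i)) (vp (pstar j)) c ->
     E c i = E c j -> lam <> E c i) ->
  False.
Proof.
move=> VC HC Hmin Hn1 Hn2.
have Vp i : valid (vp (pstar i)) by right.
have F2 i : exists j, E (C j) i <= lam.
  apply: NNPP => Hn.
  have Hall j : lam < E (C j) i.
    by rewrite ltNge; apply/negP => H; apply: Hn; exists j.
  have H1 : lam < \big[Num.min/E (C (Ordinal hk)) i]_(j < k) E (C j) i.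
    by apply: lt_bigmin.
  have H2 : \big[Num.min/E (C (Ordinal hk)) i]_(j < k) E (C j) i <= kcost len dV hn w f loc hk C.
    rewrite /kcost /=.
    exact: (le_bigmax _ (fun i => \big[Num.min/E (C (Ordinal hk)) i]_(j < k) E (C j) i) i).
  move: H1 H2; rewrite HC; lra.
have Key j : exists e, 0 < e /\ forall t, 0 < t <= e ->
    exists x, [/\ valid x, d (C j) x <= t & forall i, E (C j) i = lam -> E x i < lam].
  set c := C j; have Vc : valid c := VC j.
  case: (classic (exists i0, E c i0 = lam)) => [[i0 Hi0]|Hno]; last first.
    exists 1; split; first exact: ltr01.
    move=> t /andP [Ht _]; exists c; split => //.
      by rewrite tdist_xx; apply: ltW.
    by move=> i Hi; exfalso; apply: Hno; exists i.
  have Elt i : E c i = lam -> E (vp (pstar i)) i < lam.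
    move=> Hi; have := Hpstar i c Vc; rewrite le_eqVlt => /orP [/eqP Heq|]; last by rewrite Hi.
    by exfalso; apply: (Hn1 i); rewrite Heq.
  have Dpos i : E c i = lam -> 0 < d c (vp (pstar i)).
    move=> Hi; have L := E_lip c (vp (pstar i)) i Vc (Vp i); have G := pd_ge0 Htree HdV Vc (Vp i).
    have El := Elt i Hi; have Wi := Hw i.
    case: (lerP (d c (vp (pstar i))) 0) => // H0.
    have Z : d c (vp (pstar i)) = 0 by lra.
    move: L; rewrite Z mulr0 addr0 Hi; lra.
  set p0 := vp (pstar i0).
  have Gap i : E c i = lam -> 0 < (d c p0 + d c (vp (pstar i)) - d p0 (vp (pstar i))) / 4.
    move=> Hi; apply: divr_gt0; last by lra.
    have T := ptri Htree HdV (Vp i0) Vc (Vp i).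
    have S := tdist_sym Htree HdV p0 c.
    case: (lerP (d c p0 + d c (vp (pstar i)) - d p0 (vp (pstar i))) 0) => // H0.
    exfalso; apply: (Hn2 i0 i c Vc).
    - rewrite /on_path -/p0; lra.
    - by rewrite Hi0 Hi.
    - by rewrite Hi0.
  have [eg [Heg Hgeo]] := geo Htree HdV Vc (Dpos i0 Hi0).
  have [eq [Heq Hgap]] := @fin_pos R _ (fun i => E c i == lam)
    (fun i => (d c p0 + d c (vp (pstar i)) - d p0 (vp (pstar i))) / 4)
    (fun i Hi => Gap i (eqP Hi)).
  exists (Num.min eg eq); split.
    by case: (mincase eg eq) => [[-> _]|[-> _]].
  move=> t /andP [Ht1 Ht2].
  have Hteg : t <= eg by move: Ht2; case: (mincase eg eq) => [[-> ?]|[-> ?]]; lra.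
  have Hteq : t <= eq by move: Ht2; case: (mincase eg eq) => [[-> ?]|[-> ?]]; lra.
  have [x [Vx Hcx Hxp0]] := Hgeo t (introT andP (conj Ht1 Hteg)).
  exists x; split => //; first by rewrite Hcx.
  move=> i Hi.
  have Hg : eq <= (d c p0 + d c (vp (pstar i)) - d p0 (vp (pstar i))) / 4 :=
    Hgap i (introT eqP Hi).
  have Hxp : d x (vp (pstar i)) = d c (vp (pstar i)) - t.
    apply: (gromov Htree HdV Vc Vx (Vp i0) (Vp i) Hcx Hxp0); lra.
  have Hcv := E_conv c x (vp (pstar i)) i t Vc Vx (Vp i) (ltW Ht1) Hcx Hxp.
  have Dp := Dpos i Hi; have El := Elt i Hi.
  have P1 : 0 < t * (lam - E (vp (pstar i)) i) by apply: mulr_gt0; lra.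
  rewrite Hi in Hcv.
  case: (lerP lam (E x i)) => // Hge; exfalso.
  have := ler_wpM2l (ltW Dp) Hge; nra.
pose P (ij : 'I_n * 'I_k) := E (C ij.2) ij.1 < lam.
pose g (ij : 'I_n * 'I_k) := (lam - E (C ij.2) ij.1) / (w ij.1 + 1).
have Pg ij : P ij -> 0 < g ij.
  rewrite /P /g => Hij; apply: divr_gt0; first lra.
  have := Hw ij.1; lra.
have [del [Hdel Hdelg]] := @fin_pos R _ P g Pg.
have Build j : exists x, [/\ valid x, d (C j) x <= del &
    forall i, E (C j) i = lam -> E x i < lam].
  have [e [He Hx]] := Key j.
  have Hm : 0 < Num.min del e by case: (mincase del e) => [[-> _]|[-> _]].
  have Hm2 : Num.min del e <= e by case: (mincase del e) => [[-> ?]|[-> ?]]; lra.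
  have [x [Vx Hd Hp]] := Hx (Num.min del e) (introT andP (conj Hm Hm2)).
  exists x; split => //.
  move: Hd; case: (mincase del e) => [[-> ?]|[-> ?]]; lra.
have [C' HC'] := fin_all_exists Build.
have VC' j : valid (C' j) by case: (HC' j).
have Good i : exists j, E (C' j) i < lam.
  have [j Hj] := F2 i; exists j.
  case: (HC' j) => _ Hd Hp.
  move: Hj; rewrite le_eqVlt => /orP [/eqP Heq|Hlt]; first exact: Hp.
  have L := E_lip (C' j) (C j) i (VC' j) (VC j).
  have Hg : del <= g (i, j) by apply: Hdelg.
  rewrite /g /= in Hg.
  have Wi := Hw i.
  have Q : (lam - E (C j) i) / (w i + 1) * (w i + 1) = lam - E (C j) i.
    by rewrite divfK //; apply/eqP => H; lra.
  have Qp : 0 < (lam - E (C j) i) / (w i + 1) by apply: divr_gt0; lra.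
  rewrite (tdist_sym Htree HdV) in L.
  have := ler_wpM2l Wi Hd; have := ler_wpM2l Wi Hg; nra.
have Hlt : kcost len dV hn w f loc hk C' < lam.
  rewrite /kcost /=.
  have Gi i : \big[Num.min/E (C' (Ordinal hk)) i]_(j < k) E (C' j) i < lam.
    have [j Hj] := Good i.
    apply: (le_lt_trans _ Hj); apply: bigmin_le.
  apply: bigmax_lt => //.
have := Hmin C' VC'; lra.
Qed.

End Main.

Theorem mainTheorem7
  (R : realFieldType) (V : finType) (adj : rel V) (len : V -> V -> R)
  (dV : V -> V -> R)
  (Htree : is_wtree adj len) (HdV : is_vdist adj len dV)
  (n : nat) (hn : (0 < n)%N) (m : 'I_n -> nat)
  (w : 'I_n -> R) (f : forall i, 'I_(m i) -> R)
  (loc : forall i, 'I_(m i) -> point R V)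
  (Hw : forall i, 0 <= w i)
  (Hf : forall i j, 0 <= f i j)
  (Hf1 : forall i, \sum_(j < m i) f i j = 1)
  (Hloc : forall i j, valid_pt adj len (loc i j))
  (pstar : 'I_n -> V)
  (Hpstar : forall i x, valid_pt adj len x ->
     Ed len dV w f loc (vpt R (pstar i)) i <= Ed len dV w f loc x i)
  (k : nat) (hk : (1 <= k)%N) (lam : R)
  (Hopt_att : exists C : 'I_k -> point R V,
     (forall j, valid_pt adj len (C j)) /\ kcost len dV hn w f loc hk C = lam)
  (Hopt_min : forall C : 'I_k -> point R V,
     (forall j, valid_pt adj len (C j)) -> lam <= kcost len dV hn w f loc hk C) :
  (exists i, lam = Ed len dV w f loc (vpt R (pstar i)) i) \/
  (exists i j (c : point R V),
     [/\ valid_pt adj len c,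
         on_path len dV (vpt R (pstar i)) (vpt R (pstar j)) c,
         Ed len dV w f loc c i = Ed len dV w f loc c j
       & lam = Ed len dV w f loc c i]).
Proof.
case: (classic (exists i, lam = Ed len dV w f loc (vpt R (pstar i)) i)) => [H|Hn1].
  by left.
right; apply: NNPP => Hn2.
have [C [VC HC]] := Hopt_att.
apply: (main_contra _ _ _ _ _ Htree HdV _ _ _ _ _ Hw Hf Hf1 Hloc _ Hpstar hn _ hk _ C VC HC Hopt_min).
- by move=> i Hi; apply: Hn1; exists i.
- by move=> i j c Vc Hp Hij Hl; apply: Hn2; exists i, j, c; split.
Qed.
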